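(* Let $p\ge5$ be prime and $m\ge2$ an integer. Then the polynomial $$f_p=1+\sum_{k=0}^{(p-1)/2}(-1)^k\frac{p}{p-k}\binom{p-k}{k}m^kZ^{p-2k}\in\mathbb{Z}[Z]$$ is irreducible in $\mathbb{Q}[Z]$.
   Context: This polynomial equals $\sqrt m^{\,p}F_p(Z/\sqrt m)+1$ where $F_p(Z)=2T_p(Z/2)$ with $T_p$ the Chebyshev polynomial of the first kind; it is the De Moivre polynomial $f_p(Z,d,R)$ with $d=-1/(2m^{(p-1)/2})$, $R=(1-4m^p)/(4m^{p-1})$ (so $D=d^2-R=m$). *)

(* Defs.v *)
From mathcomp Require Import all_boot all_order all_algebra.
Set Implicit Arguments. Unset Strict Implicit. Unset Printing Implicit Defensive.
From mathcomp Require Import rat.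
Import GRing.Theory Num.Theory.
Local Open Scope ring_scope.

Definition f_poly (p m : nat) : {poly rat} :=
  1 + \sum_(0 <= k < ((p.-1)./2).+1)
        ((-1) ^+ k * (p%:R / (p - k)%:R) * ('C(p - k, k))%:R * (m%:R) ^+ k)%:P
          * 'X ^+ (p - 2 * k).

(* Main.v *)
Require Import Defs.
From mathcomp Require Import all_boot all_order all_algebra all_field.
From mathcomp Require Import ring lra zify.
Set Implicit Arguments. Unset Strict Implicit. Unset Printing Implicit Defensive.
Import GRing.Theory Num.Theory.
Local Open Scope ring_scope.

Section Dickson.
Variable (R : comNzRingType) (mu : R).

Definition tE (n k : nat) : {poly R} :=
  ('C(n - k, k)%:R * (- mu) ^+ k)%:P * 'X^(n - 2 * k).
Definition E n := \sum_(0 <= k < n.+1) tE n k.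

Lemma tE0 n k : (n < 2 * k)%N -> tE n k = 0.
Proof.
move=> h; rewrite /tE bin_small; last by lia.
by rewrite mul0r polyC0 mul0r.
Qed.

Lemma E_ext n N : (n < 2 * N)%N -> E n = \sum_(0 <= k < N) tE n k.
Proof.
move=> hN; rewrite /E.
case: (leqP N n.+1) => hle.
  rewrite (@big_cat_nat _ _ _ N 0 n.+1 _ _ (leq0n N) hle) /= [X in _ + X]big1_seq ?addr0 //.
  move=> k /andP[_]; rewrite mem_index_iota => /andP[hk _]; apply: tE0; lia.
rewrite [RHS](@big_cat_nat _ _ _ n.+1 0 N _ _ (leq0n _) (ltnW hle)) /= [X in _ = _ + X]big1_seq ?addr0 //.
move=> k /andP[_]; rewrite mem_index_iota => /andP[hk _]; apply: tE0; lia.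
Qed.

Lemma tEX n k : 'X * tE n.+1 k = ('C(n.+1 - k, k)%:R * (- mu) ^+ k)%:P * 'X^(n.+2 - 2 * k).
Proof.
rewrite /tE; case: (leqP (2 * k) n.+1) => hk.
  by rewrite mulrCA -exprS; congr (_ * 'X^_); lia.
by rewrite bin_small; [rewrite mul0r polyC0 !mul0r mulr0|lia].
Qed.

Lemma E_rec n : E n.+2 = 'X * E n.+1 - mu%:P * E n.
Proof.
rewrite (@E_ext n.+1 n.+3); last lia.
rewrite (@E_ext n n.+2); last lia.
rewrite /E big_nat_recl // [in RHS]big_nat_recl // mulrDr.
rewrite !mulr_sumr -addrA -sumrB; congr (_ + _).
  rewrite tEX /tE; congr (_ * 'X^_); lia.
apply: eq_bigr => k _; rewrite tEX /tE.
rewrite !mulrA -polyCM.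
have -> : (n.+2 - 2 * k.+1 = n - 2 * k)%N by lia.
rewrite -mulrBl -polyCB; congr (_%:P * _).
case: (leqP k n) => hk.
  have -> : (n.+2 - k.+1 = (n - k).+1)%N by lia.
  have -> : (n.+1 - k.+1 = n - k)%N by lia.
  rewrite binS natrD exprS; ring.
rewrite !bin_small; try lia.
by rewrite !(mul0r, mulr0, subr0).
Qed.

Lemma E0 : E 0 = 1.
Proof. by rewrite /E big_nat1 /tE bin0 mul1r expr0 polyC1 mul1r. Qed.

Lemma E1 : E 1 = 'X.
Proof.
rewrite /E big_nat_recr //= big_nat1 /tE bin0 expr0 mul1r polyC1 mul1r.
by rewrite bin_small // mul0r polyC0 mul0r addr0.
Qed.

Fixpoint Dp n : {poly R} * {poly R} :=
  match n with 0 => (2%:P, 'X) | n'.+1 => ((Dp n').2, 'X * (Dp n').2 - mu%:P * (Dp n').1) end.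
Definition D n := (Dp n).1.

Lemma D0 : D 0 = 2%:P. Proof. by []. Qed.
Lemma D1 : D 1 = 'X. Proof. by []. Qed.
Lemma D_rec n : D n.+2 = 'X * D n.+1 - mu%:P * D n.
Proof. by []. Qed.

Lemma D_E n : D n.+2 = E n.+2 - mu%:P * E n.
Proof.
suff : D n.+2 = E n.+2 - mu%:P * E n /\ D n.+3 = E n.+3 - mu%:P * E n.+1 by case.
elim: n => [|n [IH1 IH2]].
  have h2 : (2%:P : {poly R}) = 1 + 1 by rewrite -polyC1 -polyCD.
  rewrite !D_rec D1 D0 !E_rec E1 E0 h2; split; ring.
split => //; rewrite D_rec IH1 IH2 (E_rec n.+2) (E_rec n); ring.
Qed.

End Dickson.
Definition nk (p k : nat) : nat := ('C(p - k, k) + (0 < k)%N * 'C(p - k - 1, k.-1))%N.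

Section Dickson2.
Variable (R : comNzRingType) (mu : R).

Lemma D_odd h : D mu (2 * h).+3 =
  \sum_(0 <= k < h.+2) ((nk (2 * h).+3 k)%:R * (- mu) ^+ k)%:P * 'X^((2 * h).+3 - 2 * k).
Proof.
rewrite D_E (@E_ext _ _ _ h.+2); last lia.
rewrite (@E_ext _ _ _ h.+1); last lia.
rewrite big_nat_recl // [RHS]big_nat_recl // mulr_sumr -addrA -sumrB.
congr (_ + _).
apply: eq_bigr => k _; rewrite /tE /nk !mulrA -polyCM.
have -> : ((2 * h).+1 - 2 * k = (2 * h).+3 - 2 * k.+1)%N by lia.
rewrite -mulrBl -polyCB; congr (_%:P * _).
have -> : ((2 * h).+1 - k = (2 * h).+3 - k.+1 - 1)%N by lia.
rewrite /= mul1n natrD exprS; ring.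
Qed.

Lemma D_map (S : comNzRingType) (f : {rmorphism R -> S}) n :
  map_poly f (D mu n) = D (f mu) n.
Proof.
suff : map_poly f (D mu n) = D (f mu) n /\ map_poly f (D mu n.+1) = D (f mu) n.+1 by case.
elim: n => [|n [IH1 IH2]].
  by rewrite /D /= map_polyC /= rmorph_nat map_polyX.
split => //; rewrite D_rec rmorphB rmorphM /= map_polyX rmorphM /= map_polyC /= IH1 IH2.
by rewrite D_rec.
Qed.

End Dickson2.

Lemma D_eval (F : fieldType) (mu x : F) n : x != 0 ->
  (D mu n).[x + mu / x] = x ^+ n + (mu / x) ^+ n.
Proof.
move=> x0; set y := mu / x.
have hxy : x * y = mu by rewrite /y mulrCA divff // mulr1.
suff : (D mu n).[x + y] = x ^+ n + y ^+ n /\ (D mu n.+1).[x + y] = x ^+ n.+1 + y ^+ n.+1 by case.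
elim: n => [|n [IH1 IH2]].
  by rewrite /D /= hornerC hornerX expr0 expr1; split => //; rewrite -natrD.
split => //; rewrite D_rec hornerD hornerN hornerM hornerX IH2 hornerM hornerC IH1 -hxy !exprS; ring.
Qed.

Lemma nk_H p k : (0 < k < p)%N ->
  ((p - k) * 'C(p - k - 1, k.-1) = k * 'C(p - k, k))%N.
Proof.
case: k => // k /andP[_ hk].
have := mul_bin_diag (p - k.+1) k; rewrite -subn1 => ->; by [].
Qed.

Lemma nk_mul p k : (0 < k < p)%N -> (k * nk p k = p * 'C(p - k - 1, k.-1))%N.
Proof.
move=> hk; have H := nk_H hk; rewrite /nk.
have -> : (0 < k)%N by case/andP: hk.
rewrite mul1n.
have hp : p = ((p - k) + k)%N by lia.
move: H hp; move: ('C(p - k, k)) ('C(p - k - 1, k.-1)) => c1 c2.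
move: (p - k)%N => a H hp; nia.
Qed.

Lemma nk_id p k : (k < p)%N -> (p * 'C(p - k, k) = (p - k) * nk p k)%N.
Proof.
case: k => [|k] hk; first by rewrite /nk /= subn0 bin0 addn0.
have H := @nk_H p k.+1 hk; rewrite /nk /= mul1n.
have hp : p = ((p - k.+1) + k.+1)%N by lia.
move: H hp; move: ('C(p - k.+1, k.+1)) ('C(p - k.+1 - 1, k)) => c1 c2.
move: (p - k.+1)%N => a H hp; nia.
Qed.

Lemma nk_dvd p k : prime p -> (0 < k < p)%N -> (p %| nk p k)%N.
Proof.
move=> pp hk; have H := nk_mul hk.
have : (p %| k * nk p k)%N by rewrite H dvdn_mulr.
rewrite Euclid_dvdM // => /orP[|//].
case/andP: hk => k0 kp; by rewrite gtnNdvd.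
Qed.

Lemma nk0 p : nk p 0 = 1%N.
Proof. by rewrite /nk subn0 bin0. Qed.

Lemma nk1 p : (1 < p)%N -> nk p 1 = p.
Proof. move=> hp; rewrite /nk /= bin1 bin0 mul1n; lia. Qed.

Lemma f_D h m : f_poly (2 * h).+3 m = 1 + D (m%:R : rat) (2 * h).+3.
Proof.
rewrite D_odd /f_poly; congr (1 + _).
have -> : (((2 * h).+3).-1)./2 = h.+1.
  have -> : ((2 * h).+3).-1 = (h.+1).*2 by rewrite -mul2n; lia.
  by rewrite doubleK.
apply: eq_big_nat => k /andP[_ hk]; congr (_%:P * _).
have hk' : (k < (2 * h).+3)%N by lia.
have hnz : ((2 * h).+3 - k)%:R != 0 :> rat by rewrite pnatr_eq0; lia.
have E : (((2 * h).+3)%:R / ((2 * h).+3 - k)%:R * 'C((2 * h).+3 - k, k)%:R : rat) = (nk (2 * h).+3 k)%:R.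
  apply: (mulfI hnz); rewrite mulrA mulrCA divff // mulr1 -!natrM nk_id //.
rewrite -E [in RHS]exprNn; ring.
Qed.

Lemma Fz_horner h (m : nat) (z : int) :
  (1 + D (m%:R : int) (2 * h).+3).[z] =
  1 + \sum_(0 <= k < h.+2) ((nk (2 * h).+3 k)%:R * (- m%:R) ^+ k) * z ^+ ((2 * h).+3 - 2 * k).
Proof.
rewrite D_odd hornerD hornerC horner_sum; congr (_ + _).
by apply: eq_bigr => k _; rewrite hornerCM hornerXn.
Qed.

Lemma aux1 (a b u : int): 2 <= a -> 3 <= b -> a * (b * (1 - a*u)) != 2.
Proof. move=> ha hb; apply/eqP => H.
have hab : 6 <= a * b by nia.
case: (lerP u 0) => hu.
  have h1 : 1 <= 1 - a * u by nia.
  nia.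
have h1 : 1 - a * u <= -1 by nia.
nia. Qed.
Lemma aux2 (a u : int): 2 <= a -> a * u != 1.
Proof. move=> ha; apply/eqP => H. case: (lerP u 0) => hu; nia. Qed.
Lemma aux3 (z u : int): z * u = 1 -> z = 1 \/ z = -1.
Proof. move=> H.
have : z <= -2 \/ z = -1 \/ z = 0 \/ z = 1 \/ 2 <= z by lia.
case=> [hz|[->|[hz|[->|hz]]]]; try by [left|right].
- have : u <= -1 \/ u = 0 \/ 1 <= u by lia.
  case=> [hu|[hu|hu]]; [nia| by move: H; rewrite hu mulr0| nia].
- by move: H; rewrite hz mul0r.
- have : u <= -1 \/ u = 0 \/ 1 <= u by lia.
  case=> [hu|[hu|hu]]; [nia| by move: H; rewrite hu mulr0| nia].
Qed.

Lemma eq_from0 (R : comNzRingType) (a b c : R) : c = 0 -> a - b = - c -> a = b.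
Proof. by move=> -> /eqP; rewrite oppr0 subr_eq0 => /eqP. Qed.

Lemma no_int_root h (m : nat) (z : int) : prime (2 * h).+3 -> (2 <= m)%N ->
  (1 + D (m%:R : int) (2 * h).+3).[z] != 0.
Proof.
move=> pp hm; rewrite Fz_horner.
set c := fun k => ((nk (2 * h).+3 k)%:R * (- m%:R) ^+ k : int).
have hY : forall w : int, \sum_(0 <= k < h.+2) c k * w ^+ ((2 * h).+3 - 2 * k) =
    w * \sum_(0 <= k < h.+2) c k * w ^+ ((2 * h).+2 - 2 * k).
  move=> w; rewrite mulr_sumr; apply: eq_big_nat => k /andP[_ hk].
  have -> : ((2 * h).+3 - 2 * k = ((2 * h).+2 - 2 * k).+1)%N by lia.
  by rewrite exprS mulrCA.
have hodd : forall w : int, \sum_(0 <= k < h.+2) c k * w ^+ ((2 * h).+3 - 2 * k) =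
    \sum_(0 <= k < h.+2) c k * w * w ^+ (2 * (h.+1 - k)).
  move=> w; apply: eq_big_nat => k /andP[_ hk].
  have -> : ((2 * h).+3 - 2 * k = (2 * (h.+1 - k)).+1)%N by lia.
  by rewrite exprS mulrA.
set T := \sum_(0 <= k < h.+2) c k.
have hT1 : \sum_(0 <= k < h.+2) c k * 1 ^+ ((2 * h).+3 - 2 * k) = T.
  by apply: eq_bigr => k _; rewrite expr1n mulr1.
have hTm1 : \sum_(0 <= k < h.+2) c k * (-1) ^+ ((2 * h).+3 - 2 * k) = - T.
  rewrite hodd /T -sumrN; apply: eq_bigr => k _.
  by rewrite exprM sqrrN expr1n mulr1 mulrN1.
have hp1 : (1 < (2 * h).+3)%N by lia.
pose U := \sum_(0 <= k < h) (((nk (2 * h).+3 k.+2) %/ (2 * h).+3)%:R * (- m%:R) ^+ k : int).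
have hTU : T = 1 - ((2 * h).+3)%:R * m%:R + ((2 * h).+3)%:R * m%:R ^+ 2 * U.
  rewrite /T big_nat_recl // big_nat_recl // /c nk0 (nk1 hp1) expr0 mulr1 expr1 addrA.
  congr (_ + _); first by rewrite mulrN.
  rewrite /U mulr_sumr; apply: eq_big_nat => k /andP[_ hk].
  have hd : ((2 * h).+3 %| nk (2 * h).+3 k.+2)%N by apply: nk_dvd => //; lia.
  rewrite -{1}(divnK hd) natrM !exprS; ring.
case: (z =P 1) => [->|z1].
  rewrite hT1 hTU; apply/eqP => H.
  have : (m%:R * (((2 * h).+3)%:R * (1 - m%:R * U)) = 2 :> int).
    by apply: (eq_from0 H); ring.
  move/eqP; apply/negP; apply: aux1; first by rewrite (ler_nat int).
  by rewrite (ler_nat int); lia.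
case: (z =P -1) => [->|zm1].
  rewrite hTm1 hTU; apply/eqP => H.
  have : (m%:R * U = 1 :> int).
    have : (((2 * h).+3)%:R * m%:R * (m%:R * U - 1) = 0 :> int) by apply: (eq_from0 H); ring.
    move/eqP; rewrite !mulf_eq0 !pnatr_eq0 subr_eq0; case/orP => [/orP[]|/eqP//]; lia.
  by move/eqP; apply/negP; apply: aux2; rewrite (ler_nat int).
rewrite hY; apply/eqP => H.
have : z * (- \sum_(0 <= k < h.+2) c k * z ^+ ((2 * h).+2 - 2 * k)) = 1.
  by apply: (eq_from0 H); ring.
by case/aux3 => /eqP; [rewrite (negbTE (introN eqP z1))|rewrite (negbTE (introN eqP zm1))].
Qed.

Lemma D_monic (R : comNzRingType) (mu : R) n :
  D mu n.+1 \is monic /\ size (D mu n.+1) = n.+2.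
Proof.
suff : (size (D mu n) <= n.+1)%N /\ D mu n.+1 \is monic /\ size (D mu n.+1) = n.+2 by case.
elim: n => [|n [IH1 [IH2 IH3]]].
  rewrite /D /= monicX size_polyX; split => //; exact: size_polyC_leq1.
split; first by rewrite IH3.
have hX : size ('X * D mu n.+1) = n.+3.
  rewrite mulrC size_Mmonic ?monicX ?size_polyX ?IH3 ?addn2 //; by rewrite -size_poly_eq0 IH3.
have hs : (size (- (mu%:P * D mu n))%R < size ('X * D mu n.+1)%R)%N.
  rewrite size_polyN hX; apply: (leq_ltn_trans (size_polyMleq _ _)).
  apply: (leq_ltn_trans (leq_pred _)); rewrite ltnS; exact: leq_add (size_polyC_leq1 mu) IH1.
rewrite D_rec; split.
  by rewrite monicE lead_coefDl // -monicE monicMl ?monicX.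
by rewrite size_polyDl.
Qed.

Section Gop.
Variable (F : fieldType) (mu : F).

Definition Gop (A : {poly F}) : {poly F} :=
  \sum_(i < size A) A`_i *: (('X ^+ 2 + mu%:P) ^+ i * 'X ^+ ((size A).-1 - i)).

Lemma Gop_eval A x : x != 0 -> (Gop A).[x] = x ^+ (size A).-1 * A.[x + mu / x].
Proof.
move=> x0; rewrite /Gop horner_sum [A.[_]]horner_coef mulr_sumr.
apply: eq_bigr => i _.
rewrite hornerZ hornerM hornerXn !hornerE.
have hi : (i <= (size A).-1)%N by case: i => i /=; lia.
have -> : x ^+ (size A).-1 = x ^+ i * x ^+ ((size A).-1 - i) by rewrite -exprD subnKC.
have -> : (x ^+ 2 + mu) = x * (x + mu / x) by rewrite mulrDr -expr2 mulrCA divff // mulr1.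
rewrite exprMn.
change (A`_i * (x ^+ i * (x + mu / x) ^+ i) * x ^+ ((size A).-1 - i) = x ^+ i * x ^+ ((size A).-1 - i) * A`_i * (x + mu / x) ^+ i).
ring.
Qed.

Lemma Gop0 A : A != 0 -> (Gop A).[0] = lead_coef A * mu ^+ (size A).-1.
Proof.
move=> A0; rewrite /Gop horner_sum lead_coefE.
have hs : size A = (size A).-1.+1 by rewrite prednK // lt0n size_poly_eq0.
set a := (size A).-1 in hs *.
rewrite hs big_ord_recr /= subnn expr0 mulr1.
rewrite big1 ?add0r; last first.
  move=> i _; rewrite hornerZ hornerM hornerXn expr0n.
  have -> : (a - i == 0)%N = false by case: i => i /=; lia.
  by rewrite mulr0 mulr0.
by rewrite hornerZ horner_exp hornerD hornerXn hornerC expr0n add0r.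
Qed.

Lemma Gop_size A : (size (Gop A) <= (2 * (size A).-1).+1)%N.
Proof.
rewrite /Gop; apply: (leq_trans (size_sum _ _ _)).
apply/bigmax_leqP => i _; apply: (leq_trans (size_scale_leq _ _)).
apply: (leq_trans (size_polyMleq _ _)).
have h1 : (size (('X ^+ 2 + mu%:P) ^+ i)%R <= (2 * i).+1)%N.
  apply: (leq_trans (size_poly_exp_leq _ _)).
  have : (size ('X ^+ 2 + mu%:P)%R <= 3)%N.
    apply: (leq_trans (size_polyD _ _)); rewrite size_polyXn.
    have := size_polyC_leq1 mu; rewrite geq_max; lia.
  move: (size ('X ^+ 2 + mu%:P)%R) => k hk.
  case: k hk => [|k] hk //=; nia.
rewrite size_polyXn.
have hi : (i <= (size A).-1)%N by have := ltn_ord i; lia.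
rewrite addnS /=; move: h1 hi.
move: ((size A).-1) (nat_of_ord i) => a j H1 H2.
apply: (leq_trans (leq_add H1 (leqnn (a - j)))); lia.
Qed.

End Gop.

Lemma Gop_map (F K : fieldType) (f : {rmorphism F -> K}) (mu : F) A :
  map_poly f (Gop mu A) = Gop (f mu) (map_poly f A).
Proof.
rewrite /Gop size_map_poly rmorph_sum; apply: eq_bigr => i _.
rewrite /= map_polyZ coef_map rmorphM rmorphXn /= rmorphD /= map_polyXn map_polyC /=.
by rewrite rmorphXn /= map_polyX.
Qed.

Lemma fD_monic (R : comNzRingType) (mu : R) n :
  (1 + D mu n.+1) \is monic /\ size (1 + D mu n.+1) = n.+2.
Proof.
have [mo sz] := D_monic mu n.
have hs : (size (1%R : {poly R}) < size (D mu n.+1))%N by rewrite size_poly1 sz.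
split; first by rewrite addrC monicE lead_coefDl // -monicE.
by rewrite addrC size_polyDl.
Qed.

Lemma fC_eq h m : map_poly ratr (f_poly (2 * h).+3 m) = 1 + D (m%:R : algC) (2 * h).+3.
Proof. by rewrite f_D rmorphD rmorph1 /= D_map rmorph_nat. Qed.

Lemma fZ_eq h m : map_poly intr (1 + D (m%:R : int) (2 * h).+3) = 1 + D (m%:R : algC) (2 * h).+3.
Proof. by rewrite rmorphD rmorph1 /= D_map rmorph_nat. Qed.

Lemma no_rat_root h m (w0 : rat) : prime (2 * h).+3 -> (2 <= m)%N ->
  ~~ root (1 + D (m%:R : algC) (2 * h).+3) (ratr w0).
Proof.
move=> pp hm; apply/negP => hr.
have hA : ratr w0 \in Aint.
  apply: (root_monic_Aint hr); first by have [] := fD_monic (m%:R : algC) (2 * h).+2.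
  rewrite -fZ_eq; apply/polyOverP => i; rewrite coef_map /=; exact: intr_int.
have /intrP [z Hz] := Cint_rat_Aint (Crat_rat w0) hA.
move: hr; rewrite Hz -fZ_eq /root horner_map intr_eq0.
by rewrite (negbTE (no_int_root z pp hm)).
Qed.

Lemma s_props (n : nat) : (1 <= n)%N -> exists s : algC,
  [/\ s + s^* = -1, s * s^* = n%:R & s != s^*].
Proof.
move=> hn; pose R : algC := sqrtC ((4 * n).-1)%:R.
have hR0 : 0 <= R by rewrite sqrtC_ge0.
have hRc : R^* = R by apply: conj_Creal; apply: ger0_real.
have hRR : R * R = 4 * n%:R - 1.
  have e : (4 * n).-1 = (4 * n - 1)%N by lia.
  by rewrite -expr2 sqrtCK e natrB ?natrM //; lia.
have hii : 'i * 'i = -1 :> algC by rewrite -expr2 sqrCi.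
have h2 : (2 : algC) != 0 by rewrite pnatr_eq0.
exists ((-1 + 'i * R) / 2).
have hc : ((-1 + 'i * R) / 2)^* = (-1 - 'i * R) / 2.
  rewrite rmorphM /= fmorphV /= rmorph_nat rmorphD rmorphN rmorph1 rmorphM /= conjCi hRc.
  by rewrite mulNr.
rewrite hc; split.
- by field.
- have -> : (-1 + 'i * R) / 2 * ((-1 - 'i * R) / 2) = (1 - ('i * 'i) * (R * R)) / 4 by field.
  by rewrite hii hRR; field.
- apply/eqP => H.
  have : 'i * R = 0.
    have : (-1 + 'i * R) / 2 - (-1 - 'i * R) / 2 = 0 by rewrite H subrr.
    have -> : (-1 + 'i * R) / 2 - (-1 - 'i * R) / 2 = 'i * R by field.
    by [].
  move/eqP; rewrite mulf_eq0 (negbTE (neq0Ci _)) /= => /eqP R0.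
  move: hRR; rewrite R0 mulr0 => /eqP; rewrite eq_sym subr_eq0.
  by rewrite -natrM -[1]/(1%:R) eqr_nat; lia.
Qed.

Lemma beta_contra h m (s b : algC) (P : {poly rat}) : prime (2 * h).+3 -> (2 <= m)%N ->
  s + s^* = -1 -> s * s^* = (m ^ (2 * h).+3)%:R ->
  b = (map_poly ratr P).[s] -> b ^+ (2 * h).+3 = s -> False.
Proof.
move=> pp hm ss sm Hb Hbs.
pose mC : algC := m%:R.
pose mu : {poly rat} := 'X^2 + 'X + ((m ^ (2 * h).+3)%:R)%:P.
have sc : s^* = -1 - s by rewrite -ss addrC addKr.
have mus : (map_poly ratr mu).[s] = 0.
  rewrite !rmorphD /= map_polyXn map_polyX map_polyC /= rmorph_nat !hornerE -sm sc; ring.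
have mu0 : mu != 0.
  apply/eqP => H; have := congr1 (fun q => q.[1]) H; rewrite !hornerE /=.
  have : 0 <= (m ^ (2 * h).+3)%:R :> rat by apply: ler0n.
  move: ((m ^ (2 * h).+3)%:R : rat) => c hc; rewrite expr1n => H1; clear -hc H1; lra.
have szmu : (size mu <= 3)%N.
  apply: (leq_trans (size_polyD _ _)); rewrite geq_max; apply/andP; split.
    apply: (leq_trans (size_polyD _ _)); rewrite geq_max size_polyXn size_polyX; by [].
  by apply: (leq_trans (size_polyC_leq1 _)).
set Rr := P %% mu.
have szR : (size Rr <= 2)%N.
  have h1 := ltn_modp P mu; rewrite mu0 in h1; rewrite -ltnS; exact: (leq_trans h1 szmu).
have HR : b = (map_poly ratr Rr).[s].
  by rewrite Hb {1}(divp_eq P mu) rmorphD rmorphM /= hornerD hornerM mus mulr0 add0r.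
have HRe : forall x : algC, (map_poly ratr Rr).[x] = ratr Rr`_0 + ratr Rr`_1 * x.
  move=> x; rewrite (@horner_coef_wide _ 2 (map_poly ratr Rr) x); last by rewrite size_map_poly.
  by rewrite !big_ord_recr big_ord0 /= !coef_map /= expr0 expr1 add0r mulr1.
have Hbc : b^* = ratr Rr`_0 + ratr Rr`_1 * s^*.
  rewrite -HRe HR -horner_map /= -map_poly_comp; congr (_.[_]).
  by apply: eq_map_poly => a /=; exact: (fmorph_rat Num.conj).
have Hbs' : b^* ^+ (2 * h).+3 = s^* by rewrite -rmorphXn /= Hbs.
have M0 : (m ^ (2 * h).+3)%:R != 0 :> algC by rewrite pnatr_eq0 expn_eq0; lia.
have b0 : b != 0.
  apply/eqP => b0; move: Hbs; rewrite b0 expr0n /= => s0.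
  by move: sm; rewrite -s0 mul0r => /esym /eqP; rewrite (negbTE M0).
have hnorm : b * b^* = mC.
  apply/eqP; rewrite -(@eqrXn2 _ (2 * h).+3) ?mul_conjC_ge0 ?ler0n //.
  by rewrite exprMn Hbs Hbs' sm natrX.
have hmb : mC / b = b^* by rewrite -hnorm; field.
have hw : b + mC / b = ratr (2 * Rr`_0 - Rr`_1).
  rewrite hmb Hbc HR HRe rmorphB rmorphM rmorph_nat /= sc; ring.
have hroot : root (1 + D mC (2 * h).+3) (ratr (2 * Rr`_0 - Rr`_1)).
  rewrite -hw /root hornerD hornerC D_eval // Hbs hmb Hbs' sc; apply/eqP; ring.
by move: (no_rat_root (2 * Rr`_0 - Rr`_1) pp hm); rewrite hroot.
Qed.

Lemma prod_const_seq (R : comNzRingType) (I : Type) (r : seq I) (x : R) :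
  \prod_(i <- r) x = x ^+ size r.
Proof. elim: r => [|a r IH]; first by rewrite big_nil. by rewrite big_cons IH exprS. Qed.

Lemma key h m (q : {poly rat}) : prime (2 * h).+3 -> (2 <= m)%N ->
  q %| f_poly (2 * h).+3 m -> (1 < size q)%N -> ((2 * h).+3 < size q)%N.
Proof.
move=> pp hm qf q1.
rewrite ltnNge; apply/negP => qp.
pose mC : algC := m%:R.
have mC0 : mC != 0 by rewrite pnatr_eq0; lia.
have [s [ss sm sn]] := @s_props (m ^ (2 * h).+3) (ltac:(rewrite expn_gt0; lia)).
have M0 : (m ^ (2 * h).+3)%:R != 0 :> algC by rewrite pnatr_eq0 expn_eq0; lia.
have s0 : s != 0 by apply: contraNneq M0 => s0; rewrite -sm s0 mul0r.
have sc : s^* = -1 - s by rewrite -ss addrC addKr.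
have hMp : mC ^+ (2 * h).+3 = (m ^ (2 * h).+3)%:R by rewrite natrX.
set fC := 1 + D mC (2 * h).+3.
have fCe : forall x : algC, x != 0 -> fC.[x + mC / x] = 1 + x ^+ (2 * h).+3 + (mC / x) ^+ (2 * h).+3.
  by move=> x x0; rewrite /fC hornerD hornerC D_eval // addrA.
pose qC := map_poly (ratr : rat -> algC) q.
have qCf : qC %| fC by rewrite /fC -fC_eq dvdp_map.
have szqC : size qC = size q by rewrite size_map_poly.
pose GA := Gop mC qC.
have hGA : forall x, x != 0 -> GA.[x] = x ^+ (size q).-1 * qC.[x + mC / x].
  by move=> x x0; rewrite Gop_eval // szqC.
have GAconj : map_poly Num.conj GA = GA.
  rewrite /GA Gop_map rmorph_nat -map_poly_comp; congr (Gop _ _).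
  by apply: eq_map_poly => a /=; exact: (fmorph_rat Num.conj).
have q0 : q != 0 by rewrite -size_poly_eq0; lia.
have qC0 : qC != 0 by rewrite -size_poly_eq0 szqC; lia.
have GA0 : GA != 0.
  apply/eqP => H; have := Gop0 mC qC0; rewrite -/GA H horner0 => /esym/eqP.
  by rewrite mulf_eq0 lead_coef_eq0 (negbTE qC0) expf_eq0 (negbTE mC0) andbF.
have [Qs [QsC [[|s' []] //= [Ds'] gen]]] := num_field_exists [:: s].
have inQs : forall x : Qs, exists P : {poly rat}, QsC x = (map_poly ratr P).[s].
  move=> x; have : x \in <<1; s'>>%VS by rewrite -adjoin_seq1 gen memvf.
  move=> /Fadjoin_poly_eq Hx.
  have /polyOver1P [P HP] := Fadjoin_polyOver 1%VS s' x.
  exists P; rewrite -Hx HP -Ds' -horner_map /=; congr (_.[_]).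
  apply/polyP => i; rewrite !coef_map /=.
  by rewrite alg_num_field fmorph_rat.
pose GQ := Gop (m%:R : Qs) (map_poly (in_alg Qs) q).
have GQmap : map_poly QsC GQ = GA.
  rewrite /GQ Gop_map rmorph_nat; congr (Gop _ _).
  apply/polyP => i; rewrite !coef_map /=.
  by rewrite alg_num_field fmorph_rat.
pose hQ := gcdp GQ ('X^((2 * h).+3) - s'%:P).
set hC := gcdp GA ('X^((2 * h).+3) - s%:P).
have hmap : map_poly QsC hQ = hC.
  by rewrite gcdp_map GQmap rmorphB /= map_polyXn map_polyC /= Ds'.
have hCd : hC %| 'X^((2 * h).+3) - s%:P by apply: dvdp_gcdr.
have hCG : hC %| GA by apply: dvdp_gcdl.
have szX : forall c : algC, size ('X^((2 * h).+3) - c%:P) = (2 * h).+4.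
  by move=> c; rewrite size_XnsubC.
have Xs0 : 'X^((2 * h).+3) - s%:P != 0 by rewrite -size_poly_eq0 szX.
have hC0 : hC != 0 by apply: contraNneq Xs0 => H; rewrite -dvd0p -H.
have hCs : (size hC <= (2 * h).+4)%N by rewrite -(szX s); apply: dvdp_leq.
have rootHC : forall y, GA.[y] = 0 -> y ^+ (2 * h).+3 = s -> root hC y.
  move=> y Gy ys; rewrite root_gcd /root Gy eqxx /=.
  by rewrite hornerD hornerN hornerXn hornerC ys subrr.
clearbody hC.
case: (eqVneq (size hC) 1%N) => [h1|h1].
  have nr : forall y, ~~ root hC y.
    move=> y; rewrite (size1_polyC (eq_leq h1)) rootC.
    apply: contra hC0 => /eqP c0; rewrite (size1_polyC (eq_leq h1)) c0.
    by rewrite polyC0.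
  have [z hz] : exists z, root qC z by apply/closed_rootP; rewrite szqC neq_ltn q1 orbT.
  pose t := (z + sqrtC (z ^+ 2 - 4 * mC)) / 2.
  have ht : t * t - z * t + mC = 0.
    have e := sqrtCK (z ^+ 2 - 4 * mC).
    rewrite /t; move: (sqrtC _) e => r e.
    have -> : (z + r) / 2 * ((z + r) / 2) - z * ((z + r) / 2) + mC =
      (r ^+ 2 - (z ^+ 2 - 4 * mC)) / 4 by field.
    by rewrite e subrr mul0r.
  have t0 : t != 0.
    apply/eqP => t0; move: ht; rewrite t0 !mulr0 subr0 add0r => /eqP.
    by rewrite (negbTE mC0).
  have hz' : z = t + mC / t.
    apply: (mulIf t0); rewrite mulrDl divfK //.
    by apply: (eq_from0 ht); ring.
  have Gt : GA.[t] = 0 by rewrite hGA // -hz' (eqP hz) mulr0.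
  have ft : 1 + t ^+ (2 * h).+3 + (mC / t) ^+ (2 * h).+3 = 0.
    by rewrite -fCe // -hz'; apply/eqP; exact: (root_dvdp qCf hz).
  set r := t ^+ (2 * h).+3 in ft.
  have r0 : r != 0 by rewrite expf_neq0.
  have hr : (r - s) * (r - s^*) = 0.
    move: ft; rewrite expr_div_n hMp -/r => ft.
    have -> : (r - s) * (r - s^*) = r * r - (s + s^*) * r + s * s^* by ring.
    rewrite ss sm.
    have -> : r * r - -1 * r + (m ^ (2 * h).+3)%:R =
              r * (1 + r + (m ^ (2 * h).+3)%:R / r) by field.
    by rewrite ft mulr0.
  move/eqP: hr; rewrite mulf_eq0 !subr_eq0 => /orP[/eqP rs|/eqP rs].
    by move: (nr t); rewrite rootHC.
  have Gt' : GA.[t^*] = 0.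
    by rewrite -GAconj horner_map Gt /= rmorph0.
  have ts : (t^*) ^+ (2 * h).+3 = s.
    by rewrite -rmorphXn -/r rs; exact: conjCK.
  by move: (nr t^*); rewrite rootHC.
have GAsz : (size GA <= (2 * (size q).-1).+1)%N by rewrite /GA -szqC; apply: Gop_size.
case: (eqVneq (size hC) (2 * h).+4) => [hp1|hp1].
  have e : hC %= 'X^((2 * h).+3) - s%:P by rewrite -dvdp_size_eqp // hp1 szX.
  have d1 : 'X^((2 * h).+3) - s%:P %| GA by rewrite -(eqp_dvdl _ e).
  have d2 : 'X^((2 * h).+3) - (s^*)%:P %| GA.
    rewrite -GAconj; have := d1; rewrite -(dvdp_map Num.conj) rmorphB /= map_polyXn map_polyC.
    by [].
  have ssn : s^* - s != 0 by rewrite subr_eq0 eq_sym.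
  have cop : coprimep ('X^((2 * h).+3) - s%:P) ('X^((2 * h).+3) - (s^*)%:P).
    apply/Bezout_coprimepP; exists (((s^* - s)^-1)%:P, - ((s^* - s)^-1)%:P) => /=.
    have -> : (s^* - s)^-1%:P * ('X^((2 * h).+3) - s%:P) + - (s^* - s)^-1%:P * ('X^((2 * h).+3) - (s^*)%:P)
      = ((s^* - s)^-1 * (s^* - s))%:P by rewrite polyCM polyCB; ring.
    by rewrite mulVf // polyC1 eqpxx.
  have d3 : ('X^((2 * h).+3) - s%:P) * ('X^((2 * h).+3) - (s^*)%:P) %| GA.
    by rewrite Gauss_dvdp // d1 d2.
  have := dvdp_leq GA0 d3; rewrite size_mul ?szX -?size_poly_eq0 ?szX //.
  move=> H; have := leq_trans H GAsz; move: qp; clear.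
  move: (size q) => n; lia.
have [rs Drs] := closed_field_poly_normal hC.
have lc0 : lead_coef hC != 0 by rewrite lead_coef_eq0.
have szrs : size hC = (size rs).+1.
  by rewrite {1}Drs size_scale // size_prod_XsubC.
have d0 : (0 < size rs < (2 * h).+3)%N.
  have hs0 : size hC != 0%N by rewrite size_poly_eq0.
  move: h1 hp1 hCs hs0; rewrite szrs; clear; move: (size rs) => n; lia.
have rsroots : forall z, z \in rs -> z ^+ (2 * h).+3 = s.
  move=> z zr; have : root hC z by rewrite Drs rootZ // root_prod_XsubC.
  move/(root_dvdp hCd); rewrite /root hornerD hornerN hornerXn hornerC subr_eq0.
  by move/eqP.
pose c := hC.[0] / lead_coef hC.
have hc : c = \prod_(z <- rs) (- z).
  rewrite /c {1}Drs hornerZ horner_prod mulrC mulKf //.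
  by apply: eq_bigr => z _; rewrite hornerXsubC sub0r.
have op : odd (2 * h).+3 by rewrite /= oddM.
have oddN : forall x : algC, (- x) ^+ (2 * h).+3 = - x ^+ (2 * h).+3.
  by move=> x; rewrite exprNn -signr_odd op expr1 mulN1r.
have hcp : c ^+ (2 * h).+3 = (- s) ^+ size rs.
  rewrite hc -prodrXl -prod_const_seq big_seq [RHS]big_seq.
  by apply: eq_bigr => z zr; rewrite oddN rsroots.
have cop : coprime (size rs) (2 * h).+3.
  rewrite coprime_sym prime_coprime //; case/andP: d0 => a b; by rewrite gtnNdvd.
have [[u1 u2] /= hu] : exists u : nat * nat, (u.1 * size rs - u.2 * (2 * h).+3)%N = 1%N.
  by apply/coprimeP => //; case/andP: d0.
have hu' : (u1 * size rs = u2 * (2 * h).+3 + 1)%N.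
  by move: hu; clear; move: (u1 * size rs)%N (u2 * (2 * h).+3)%N => a b; lia.
have ns0 : - s != 0 by rewrite oppr_eq0.
pose b := - (c ^+ u1 / (- s) ^+ u2).
have hb : b ^+ (2 * h).+3 = s.
  rewrite /b oddN expr_div_n -!exprM mulnC exprM hcp -exprM mulnC hu' exprD expr1.
  rewrite mulnC; field; by rewrite expf_neq0.
pose cQ := hQ.[0] / lead_coef hQ.
have hcQ : QsC cQ = c.
  by rewrite /cQ /c fmorph_div -lead_coef_map hmap !horner_coef0 -hmap coef_map.
have [P HP] := inQs (- (cQ ^+ u1 / (- s') ^+ u2)).
apply: (@beta_contra h m s b P pp hm ss sm _ hb).
by rewrite -HP rmorphN fmorph_div !rmorphXn rmorphN hcQ Ds'.
Qed.

Lemma odd_form p : prime p -> (5 <= p)%N -> exists h, p = (2 * h).+3.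
Proof.
move=> pp p5; have [p2|op] := even_prime pp; first by rewrite p2 in p5.
have := odd_double_half p; rewrite op -mul2n => e.
exists (p./2).-1; move: e p5; clear; move: (p./2) => k; lia.
Qed.

Theorem mainTheorem15 (p m : nat) :
  prime p -> (5 <= p)%N -> (2 <= m)%N -> irreducible_poly (f_poly p m).
Proof.
move=> pp p5 hm; have [h ph] := odd_form pp p5; subst p.
have [_ szf] := fD_monic (m%:R : rat) (2 * h).+2.
rewrite -f_D in szf.
have f0 : f_poly (2 * h).+3 m != 0 by rewrite -size_poly_eq0 szf.
split; first by rewrite szf.
move=> q q1 qf.
have q0 : q != 0 by apply: contraNneq f0 => q0; rewrite -dvd0p -q0.
have q2 : (1 < size q)%N.
  have : size q != 0%N by rewrite size_poly_eq0.
  move: q1; clear; move: (size q) => n; lia.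
have k := key pp hm qf q2.
have hl := dvdp_leq f0 qf.
rewrite -dvdp_size_eqp // szf; apply/eqP.
move: k hl; rewrite szf; clear; move: (size q) => n; lia.
Qed.
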